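(* Let $a=a_0+a_1e_1+a_2e_2+a_3e_3$ and $b=b_0+b_1e_1+b_2e_2+b_3e_3$ be elements of $C\ell_2\setminus\mathbb{R}$ with $a_0=b_0$ and $G(a)=G(b)$. Then the general solution of the linear equation $ax=xb$ (in $x\in C\ell_2$) is $$x=y-\frac{a'ay-a'yb-ayb'+ybb'}{2(|Cim(a)|^2+|Cim(b)|^2)},\qquad y\in C\ell_2\text{ arbitrary}.$$
   Context: $C\ell_2$ is the 4-dimensional real associative algebra with basis $1,e_1,e_2,e_3$ and multiplication $e_1^2=e_2^2=1$, $e_3^2=-1$, $e_1e_2=e_3=-e_2e_1$, $e_1e_3=e_2=-e_3e_1$, $e_3e_2=e_1=-e_2e_3$; $\mathbb{R}$ is identified with $\mathbb{R}\cdot 1$. For $a=a_0+a_1e_1+a_2e_2+a_3e_3$ ($a_i\in\mathbb{R}$): $a'=a_0+a_1e_1+a_2e_2-a_3e_3$, $G(a)=a_1^2+a_2^2-a_3^2$, $|Cim(a)|^2=a_1^2+a_2^2+a_3^2$. *)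

(* Defs.v *)
From Stdlib Require Import Reals.
Open Scope R_scope.

(* a = c0 + c1 e1 + c2 e2 + c3 e3 *)
Record Cl2 := mkCl2 { c0 : R; c1 : R; c2 : R; c3 : R }.

Definition cl_of_real (r : R) : Cl2 := mkCl2 r 0 0 0.

Definition cl_add (a b : Cl2) : Cl2 :=
  mkCl2 (c0 a + c0 b) (c1 a + c1 b) (c2 a + c2 b) (c3 a + c3 b).

Definition cl_sub (a b : Cl2) : Cl2 :=
  mkCl2 (c0 a - c0 b) (c1 a - c1 b) (c2 a - c2 b) (c3 a - c3 b).

Definition cl_scale (r : R) (a : Cl2) : Cl2 :=
  mkCl2 (r * c0 a) (r * c1 a) (r * c2 a) (r * c3 a).

(* product from e1^2=e2^2=1, e3^2=-1, e1e2=e3=-e2e1, e1e3=e2=-e3e1,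
   e3e2=e1=-e2e3, extended bilinearly *)
Definition cl_mul (a b : Cl2) : Cl2 :=
  mkCl2
    (c0 a * c0 b + c1 a * c1 b + c2 a * c2 b - c3 a * c3 b)
    (c0 a * c1 b + c1 a * c0 b + c3 a * c2 b - c2 a * c3 b)
    (c0 a * c2 b + c2 a * c0 b + c1 a * c3 b - c3 a * c1 b)
    (c0 a * c3 b + c3 a * c0 b + c1 a * c2 b - c2 a * c1 b).

Definition cl_prime (a : Cl2) : Cl2 := mkCl2 (c0 a) (c1 a) (c2 a) (- c3 a).

Definition clG (a : Cl2) : R := c1 a ^ 2 + c2 a ^ 2 - c3 a ^ 2.

Definition Cim_norm2 (a : Cl2) : R := c1 a ^ 2 + c2 a ^ 2 + c3 a ^ 2.

(* Main.v *)
Require Import Defs.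
From Stdlib Require Import Reals Lra Psatz.
Open Scope R_scope.

Lemma nonreal_pos (a : Cl2) : (forall r : R, a <> cl_of_real r) -> Cim_norm2 a > 0.
Proof.
  intros ha. destruct a as [a0 a1 a2 a3]. unfold Cim_norm2; simpl.
  destruct (Rlt_dec 0 (a1^2+a2^2+a3^2)) as [H|H]; [lra|].
  exfalso. apply (ha a0).
  assert (a1 = 0) by nra. assert (a2 = 0) by nra. assert (a3 = 0) by nra.
  subst. reflexivity.
Qed.

Lemma cl_ext (a b : Cl2) :
  Defs.c0 a = Defs.c0 b -> Defs.c1 a = Defs.c1 b ->
  Defs.c2 a = Defs.c2 b -> Defs.c3 a = Defs.c3 b -> a = b.
Proof. destruct a, b; simpl; intros; subst; reflexivity. Qed.

Lemma mul_mk a0 a1 a2 a3 b0 b1 b2 b3 : cl_mul (mkCl2 a0 a1 a2 a3) (mkCl2 b0 b1 b2 b3) =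
  mkCl2 (a0 * b0 + a1 * b1 + a2 * b2 - a3 * b3)
    (a0 * b1 + a1 * b0 + a3 * b2 - a2 * b3)
    (a0 * b2 + a2 * b0 + a1 * b3 - a3 * b1)
    (a0 * b3 + a3 * b0 + a1 * b2 - a2 * b1).
Proof. reflexivity. Qed.
Lemma add_mk a0 a1 a2 a3 b0 b1 b2 b3 : cl_add (mkCl2 a0 a1 a2 a3) (mkCl2 b0 b1 b2 b3) =
  mkCl2 (a0+b0) (a1+b1) (a2+b2) (a3+b3).
Proof. reflexivity. Qed.
Lemma sub_mk a0 a1 a2 a3 b0 b1 b2 b3 : cl_sub (mkCl2 a0 a1 a2 a3) (mkCl2 b0 b1 b2 b3) =
  mkCl2 (a0-b0) (a1-b1) (a2-b2) (a3-b3).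
Proof. reflexivity. Qed.
Lemma scale_mk r a0 a1 a2 a3 : cl_scale r (mkCl2 a0 a1 a2 a3) = mkCl2 (r*a0) (r*a1) (r*a2) (r*a3).
Proof. reflexivity. Qed.
Lemma prime_mk a0 a1 a2 a3 : cl_prime (mkCl2 a0 a1 a2 a3) = mkCl2 a0 a1 a2 (-a3).
Proof. reflexivity. Qed.
Lemma mk_eq a0 a1 a2 a3 b0 b1 b2 b3 : a0 = b0 -> a1 = b1 -> a2 = b2 -> a3 = b3 -> mkCl2 a0 a1 a2 a3 = mkCl2 b0 b1 b2 b3.
Proof. intros; subst; reflexivity. Qed.
Ltac clnorm := repeat (rewrite ?mul_mk, ?add_mk, ?sub_mk, ?scale_mk, ?prime_mk).

Definition Tt (a b y : Cl2) :=
  (cl_add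
     (cl_sub
        (cl_sub (cl_mul (cl_mul (cl_prime a) a) y)
                (cl_mul (cl_mul (cl_prime a) y) b))
        (cl_mul (cl_mul a y) (cl_prime b)))
     (cl_mul (cl_mul y b) (cl_prime b))).

Lemma T_eq a b x :
  Tt a b x = cl_sub (cl_mul (cl_prime a) (cl_sub (cl_mul a x) (cl_mul x b)))
                    (cl_mul (cl_sub (cl_mul a x) (cl_mul x b)) (cl_prime b)).
Proof.
  destruct a as [a0 a1 a2 a3]; destruct b as [b0 b1 b2 b3]; destruct x as [x0 x1 x2 x3].
  unfold Tt. clnorm. apply mk_eq; ring.
Qed.

Lemma dir1_aux u v w x c :
  x = cl_sub x (cl_scale c (cl_sub (cl_mul u (cl_sub w w)) (cl_mul (cl_sub w w) v))).
Proof.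
  destruct u, v, w, x. clnorm. apply mk_eq; ring.
Qed.

Lemma lin_eq a b y t c :
  cl_sub (cl_mul a (cl_sub y (cl_scale c t))) (cl_mul (cl_sub y (cl_scale c t)) b)
  = cl_sub (cl_sub (cl_mul a y) (cl_mul y b)) (cl_scale c (cl_sub (cl_mul a t) (cl_mul t b))).
Proof.
  destruct a, b, y, t. clnorm. apply mk_eq; ring.
Qed.

Lemma K_eq a0 a1 a2 a3 b1 b2 b3 y0 y1 y2 y3 :
  cl_sub (cl_mul (mkCl2 a0 a1 a2 a3) (Tt (mkCl2 a0 a1 a2 a3) (mkCl2 a0 b1 b2 b3) (mkCl2 y0 y1 y2 y3))) (cl_mul (Tt (mkCl2 a0 a1 a2 a3) (mkCl2 a0 b1 b2 b3) (mkCl2 y0 y1 y2 y3)) (mkCl2 a0 b1 b2 b3)) =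
  cl_add (cl_scale (2 * (a1 ^ 2 + a2 ^ 2 + a3 ^ 2 + (b1 ^ 2 + b2 ^ 2 + b3 ^ 2)))
                   (cl_sub (cl_mul (mkCl2 a0 a1 a2 a3) (mkCl2 y0 y1 y2 y3)) (cl_mul (mkCl2 y0 y1 y2 y3) (mkCl2 a0 b1 b2 b3))))
         (cl_scale (a1 ^ 2 + a2 ^ 2 - a3 ^ 2 - (b1 ^ 2 + b2 ^ 2 - b3 ^ 2))
            (mkCl2 (-(a1*y1) - a2*y2 - a3*y3 - b3*y3 - b1*y1 - b2*y2)
                   (-(a1*y0) + a3*y2 + a2*y3 - b3*y2 - b1*y0 - b2*y3)
                   (-(a2*y0) - a1*y3 - a3*y1 + b3*y1 - b2*y0 + b1*y3)
                   (a3*y0 + a2*y1 - a1*y2 + b3*y0 - b2*y1 + b1*y2))).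
Proof.
 unfold Tt. clnorm. apply mk_eq. all: ring.
Qed.


Lemma fin_aux M K c n :
  c * n = 1 -> cl_sub M (cl_scale c (cl_add (cl_scale n M) (cl_scale 0 K))) = mkCl2 0 0 0 0.
Proof.
  intros H. destruct M as [m0 m1 m2 m3], K.
  clnorm. apply mk_eq.
  - transitivity (m0 * (1 - c * n)); [ring | rewrite H; ring].
  - transitivity (m1 * (1 - c * n)); [ring | rewrite H; ring].
  - transitivity (m2 * (1 - c * n)); [ring | rewrite H; ring].
  - transitivity (m3 * (1 - c * n)); [ring | rewrite H; ring].
Qed.

Lemma sub0 u v : cl_sub u v = mkCl2 0 0 0 0 -> u = v.
Proof.
  destruct u, v; rewrite sub_mk; intros H.
  injection H; intros; apply mk_eq; lra.
Qed.

Theorem theorem5p1 (a b : Cl2)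
  (ha : forall r : R, a <> cl_of_real r)
  (hb : forall r : R, b <> cl_of_real r)
  (h0 : c0 a = c0 b) (hG : clG a = clG b) :
  forall x : Cl2,
    cl_mul a x = cl_mul x b <->
    exists y : Cl2,
      x = cl_sub y
            (cl_scale (/ (2 * (Cim_norm2 a + Cim_norm2 b)))
               (cl_add
                  (cl_sub
                     (cl_sub (cl_mul (cl_mul (cl_prime a) a) y)
                             (cl_mul (cl_mul (cl_prime a) y) b))
                     (cl_mul (cl_mul a y) (cl_prime b)))
                  (cl_mul (cl_mul y b) (cl_prime b)))).
Proof.
  intros x; split.
  - intros Hx. exists x.
    change (x = cl_sub x (cl_scale (/ (2 * (Cim_norm2 a + Cim_norm2 b))) (Tt a b x))).
    rewrite T_eq, Hx. apply dir1_aux.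
  - intros [y ->].
    change (cl_mul a (cl_sub y (cl_scale (/ (2 * (Cim_norm2 a + Cim_norm2 b))) (Tt a b y)))
            = cl_mul (cl_sub y (cl_scale (/ (2 * (Cim_norm2 a + Cim_norm2 b))) (Tt a b y))) b).
    apply sub0. rewrite lin_eq.
    pose proof (nonreal_pos a ha) as Pa.
    pose proof (nonreal_pos b hb) as Pb.
    destruct a as [a0 a1 a2 a3]; destruct b as [b0 b1 b2 b3]; destruct y as [y0 y1 y2 y3].
    unfold Cim_norm2, clG in Pa, Pb, hG; simpl in h0, Pa, Pb, hG. subst b0.
    rewrite K_eq.
    replace (a1 ^ 2 + a2 ^ 2 - a3 ^ 2 - (b1 ^ 2 + b2 ^ 2 - b3 ^ 2)) with 0 by lra.
    apply fin_aux. unfold Cim_norm2; simpl. field. lra.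
Qed.
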